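(* Let $d\ge3$ and let $X,Y\in M_d(\mathbb{C})$ be diagonal matrices. Then the matrix $H(X,Y)$ is positive semidefinite, where $H(X,Y)$ is the hermitian matrix of order $2d^2$ given by $H=H_1-\tfrac12(H_2+H_3)+\tfrac14H_4$ with $$H_1=\begin{bmatrix}\|X\|^2&\operatorname{tr}(X^\dagger Y)\\ \operatorname{tr}(Y^\dagger X)&\|Y\|^2\end{bmatrix}\otimes I_{d^2},\qquad H_2=\begin{bmatrix}X^\dagger X&X^\dagger Y\\ Y^\dagger X&Y^\dagger Y\end{bmatrix}\otimes I_d,$$ $$H_3=\begin{bmatrix}I_d\otimes X^*X^T&I_d\otimes X^*Y^T\\ I_d\otimes Y^*X^T&I_d\otimes Y^*Y^T\end{bmatrix},\qquad H_4=\begin{bmatrix}\tilde X^*\tilde X^T&\tilde X^*\tilde Y^T\\ \tilde Y^*\tilde X^T&\tilde Y^*\tilde Y^T\end{bmatrix}.$$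
   Context: $Z^*$ is the entrywise complex conjugate, $Z^T$ the transpose, $Z^\dagger$ the conjugate transpose, $\|Z\|^2=\operatorname{tr}(Z^\dagger Z)$, $I_m$ the identity matrix of order $m$, and $A\otimes B=[a_{ij}B]$ for $A=[a_{ij}]$. For a matrix $Z$, $\tilde Z$ is the column vector obtained by stacking the columns of $Z$ one below the other, starting with the first. *)

(* Defs.v *)
From HB Require Import structures.
From mathcomp Require Import all_boot all_order all_algebra.
From mathcomp Require Import complex mxtens.
From mathcomp Require Import reals.
Set Implicit Arguments. Unset Strict Implicit. Unset Printing Implicit Defensive.
Import Order.TTheory GRing.Theory Num.Theory.
Local Open Scope ring_scope.

Section Defs.
Variable C : numClosedFieldType.

Definition conjmx m n (Z : 'M[C]_(m, n)) : 'M[C]_(m, n) := map_mx Num.conj Z.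
Definition adjmx m n (Z : 'M[C]_(m, n)) : 'M[C]_(n, m) := (conjmx Z)^T.
Definition fnorm2 n (Z : 'M[C]_n) : C := \tr (adjmx Z *m Z).
(* tilde Z : stacking the columns of Z, first column first.
   mxvec stacks the rows (row-major), so we vectorize the transpose. *)
Definition colvec m n (Z : 'M[C]_(m, n)) : 'cV[C]_(n * m) := (mxvec Z^T)^T.

Definition psd n (A : 'M[C]_n) : Prop :=
  adjmx A = A /\ forall v : 'cV[C]_n, 0 <= (adjmx v *m A *m v) ord0 ord0.

Lemma eqH1 d : (2 * (d * d) = d * d + d * d)%N.
Proof. by rewrite mul2n addnn. Qed.
Lemma eqH2 d : ((d + d) * d = d * d + d * d)%N.
Proof. by rewrite mulnDl. Qed.

Variable d : nat.
Variables X Y : 'M[C]_d.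

Definition H1 : 'M[C]_(d * d + d * d) :=
  castmx (eqH1 d, eqH1 d)
   ((\matrix_(i < 2, j < 2)
       if (i == 0 :> nat) && (j == 0 :> nat) then fnorm2 X
       else if (i == 0 :> nat) then \tr (adjmx X *m Y)
       else if (j == 0 :> nat) then \tr (adjmx Y *m X)
       else fnorm2 Y) *t (1%:M : 'M[C]_(d * d))).

Definition H2 : 'M[C]_(d * d + d * d) :=
  castmx (eqH2 d, eqH2 d)
   (block_mx (adjmx X *m X) (adjmx X *m Y) (adjmx Y *m X) (adjmx Y *m Y)
      *t (1%:M : 'M[C]_d)).

Definition H3 : 'M[C]_(d * d + d * d) :=
  block_mx ((1%:M : 'M[C]_d) *t (conjmx X *m X^T))
           ((1%:M : 'M[C]_d) *t (conjmx X *m Y^T))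
           ((1%:M : 'M[C]_d) *t (conjmx Y *m X^T))
           ((1%:M : 'M[C]_d) *t (conjmx Y *m Y^T)).

Definition H4 : 'M[C]_(d * d + d * d) :=
  block_mx (conjmx (colvec X) *m (colvec X)^T) (conjmx (colvec X) *m (colvec Y)^T)
           (conjmx (colvec Y) *m (colvec X)^T) (conjmx (colvec Y) *m (colvec Y)^T).

Definition Hmat : 'M[C]_(d * d + d * d) :=
  H1 - 2^-1 *: (H2 + H3) + 4^-1 *: H4.
End Defs.

(* Main.v *)
Require Import Defs.
From HB Require Import structures.
From mathcomp Require Import all_boot all_order all_algebra.
From mathcomp Require Import complex mxtens.
From mathcomp Require Import reals.
From mathcomp Require Import ring.
Set Implicit Arguments. Unset Strict Implicit. Unset Printing Implicit Defensive.
Import Order.TTheory GRing.Theory Num.Theory.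
Local Open Scope ring_scope.

Section Gen.
Variable C : numClosedFieldType.

Lemma adjmxK m n (A : 'M[C]_(m,n)) : adjmx (adjmx A) = A.
Proof. by apply/matrixP=> i j; rewrite !mxE conjCK. Qed.

Lemma adjmx_mul m n p (A : 'M[C]_(m,n)) (B : 'M[C]_(n,p)) :
  adjmx (A *m B) = adjmx B *m adjmx A.
Proof.
apply/matrixP=> i j; rewrite !mxE rmorph_sum; apply: eq_bigr => k _.
by rewrite !mxE rmorphM mulrC.
Qed.

Lemma adjmxD m n (A B : 'M[C]_(m,n)) : adjmx (A + B) = adjmx A + adjmx B.
Proof. by apply/matrixP=> i j; rewrite !mxE rmorphD. Qed.

Lemma adjmxZ m n c (A : 'M[C]_(m,n)) : adjmx (c *: A) = c^* *: adjmx A.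
Proof. by apply/matrixP=> i j; rewrite !mxE rmorphM. Qed.

Lemma psdD n (A B : 'M[C]_n) : psd A -> psd B -> psd (A + B).
Proof.
move=> [hA qA] [hB qB]; split; first by rewrite adjmxD hA hB.
move=> v; rewrite mulmxDr mulmxDl mxE; exact: addr_ge0.
Qed.

Lemma psdZ n c (A : 'M[C]_n) : 0 <= c -> psd A -> psd (c *: A).
Proof.
move=> c0 [hA qA]; split; first by rewrite adjmxZ hA geC0_conj.
move=> v; rewrite -scalemxAr -scalemxAl mxE; exact: mulr_ge0.
Qed.

Lemma psd_gram n (w : 'rV[C]_n) : psd (adjmx w *m w).
Proof.
split; first by rewrite adjmx_mul adjmxK.
move=> v; rewrite mulmxA -adjmx_mul -mulmxA.
rewrite mxE big_ord1 !mxE mulrC; exact: mul_conjC_ge0.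
Qed.

Variable d : nat.
Hypothesis d0 : (0 < d)%N.
Variables X Y : 'M[C]_d.
Hypotheses (hX : is_diag_mx X) (hY : is_diag_mx Y).

Definition ix (p : 'I_(d*d)) : 'I_d := (mxtens_unindex p).1.
Definition kx (p : 'I_(d*d)) : 'I_d := (mxtens_unindex p).2.
Definition eF (f : 'I_d -> C) (p : 'I_(d*d)) :=
  \sum_m f m - 2^-1 * f (ix p) - 2^-1 * f (kx p).
Definition cf (A B : 'M[C]_d) m := (A m m)^* * B m m.
Definition Dm (A B : 'M[C]_d) : 'M[C]_(d*d) :=
  \matrix_(p, q) ((p == q)%:R * eF (cf A B) p).

Lemma divR (p : 'I_(d*d)) : ((d*d + p) %/ (d*d) = 1)%N.
Proof. by rewrite -{1}[(d*d)%N]mul1n divnMDl ?muln_gt0 ?d0 // divn_small. Qed.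
Lemma modR (p : 'I_(d*d)) : ((d*d + p) %% (d*d) = p)%N.
Proof. by rewrite modnDl modn_small. Qed.
Lemma divL (p : 'I_(d*d)) : (p %/ (d*d) = 0)%N.
Proof. by rewrite divn_small. Qed.
Lemma modL (p : 'I_(d*d)) : (p %% (d*d) = p)%N.
Proof. by rewrite modn_small. Qed.

Ltac h1t := rewrite castmxE !mxE /= ?divR ?modR ?divL ?modL /= -val_eqE /= ?modR ?modL.

Lemma H1Eul p q : H1 X Y (lshift _ p) (lshift _ q) = (p == q)%:R * fnorm2 X.
Proof. by h1t; rewrite mulrC. Qed.
Lemma H1Eur p q : H1 X Y (lshift _ p) (rshift _ q) = (p == q)%:R * \tr (adjmx X *m Y).
Proof. by h1t; rewrite mulrC. Qed.
Lemma H1Edl p q : H1 X Y (rshift _ p) (lshift _ q) = (p == q)%:R * \tr (adjmx Y *m X).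
Proof. by h1t; rewrite mulrC. Qed.
Lemma H1Edr p q : H1 X Y (rshift _ p) (rshift _ q) = (p == q)%:R * fnorm2 Y.
Proof. by h1t; rewrite mulrC. Qed.
Lemma ordL (o : 'I_(d+d)) (i : 'I_d) : val o = val i -> o = lshift d i.
Proof. by move=> h; apply: val_inj. Qed.
Lemma ordR (o : 'I_(d+d)) (i : 'I_d) : val o = (d + i)%N -> o = rshift d i.
Proof. by move=> h; apply: val_inj. Qed.
Lemma ordE (o : 'I_d) (i : 'I_d) : val o = val i -> o = i.
Proof. by move=> h; apply: val_inj. Qed.

Lemma diag0 (A : 'M[C]_d) i j : is_diag_mx A -> i != j -> A i j = 0.
Proof. by move=> /is_diag_mxP hA ne; apply: hA. Qed.

Lemma adj_mulE (A B : 'M[C]_d) i j : is_diag_mx A -> is_diag_mx B ->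
  (adjmx A *m B) i j = (i == j)%:R * cf A B i.
Proof.
move=> hA hB; rewrite mxE (bigD1 i) //= big1 ?addr0; last first.
  by move=> k ne; rewrite !mxE (diag0 hA ne) rmorph0 mul0r.
rewrite !mxE /cf; have [<-|ne] := eqVneq i j; first by rewrite mul1r.
by rewrite (diag0 hB ne) mulr0 mul0r.
Qed.

Lemma conj_mulTE (A B : 'M[C]_d) i j : is_diag_mx A -> is_diag_mx B ->
  (Defs.conjmx A *m B^T) i j = (i == j)%:R * cf A B i.
Proof.
move=> hA hB; rewrite mxE (bigD1 i) //= big1 ?addr0; last first.
  by move=> k ne; rewrite !mxE; rewrite eq_sym in ne; rewrite (diag0 hA ne) rmorph0 mul0r.
rewrite !mxE /cf; have [<-|ne] := eqVneq i j; first by rewrite mul1r.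
by rewrite eq_sym in ne; rewrite (diag0 hB ne) mulr0 mul0r.
Qed.

Lemma tr_adjE (A B : 'M[C]_d) : is_diag_mx A -> is_diag_mx B ->
  \tr (adjmx A *m B) = \sum_m cf A B m.
Proof. by move=> hA hB; apply: eq_bigr => m _; rewrite adj_mulE // eqxx mul1r. Qed.

Lemma ixkx p q : ((ix p == ix q) && (kx p == kx q)) = (p == q).
Proof.
by rewrite -xpair_eqE /ix /kx -!surjective_pairing (can_eq (@mxtens_unindexK _ _)).
Qed.

Lemma comb p q (c : C) :
  ((ix p == ix q)%:R * c) * (kx p == kx q)%:R = (p == q)%:R * c.
Proof.
rewrite -ixkx; have [_|] := eqVneq (ix p) (ix q) => /=; last by rewrite !mul0r.
by rewrite mul1r mulrC.
Qed.

Lemma comb2 p q (c : C) :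
  (ix p == ix q)%:R * ((kx p == kx q)%:R * c) = (p == q)%:R * c.
Proof. by rewrite mulrA -comb mulrAC. Qed.

Ltac h2t p q := rewrite castmxE mxE;
 first [rewrite (@ordL (@mxtens_unindex (d+d) d _).1 (ix p)); last by []
       |rewrite (@ordR (@mxtens_unindex (d+d) d _).1 (ix p)); last by rewrite /= divnMDl];
 first [rewrite (@ordL (@mxtens_unindex (d+d) d _).1 (ix q)); last by []
       |rewrite (@ordR (@mxtens_unindex (d+d) d _).1 (ix q)); last by rewrite /= divnMDl];
 (rewrite (@ordE (@mxtens_unindex (d+d) d _).2 (kx p)); last by rewrite /= ?modnMDl);
 (rewrite (@ordE (@mxtens_unindex (d+d) d _).2 (kx q)); last by rewrite /= ?modnMDl);
 rewrite ?block_mxEul ?block_mxEur ?block_mxEdl ?block_mxEdr adj_mulE // [1%:M _ _]mxE comb.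

Lemma H2Eul p q : H2 X Y (lshift _ p) (lshift _ q) = (p == q)%:R * cf X X (ix p).
Proof. by h2t p q. Qed.
Lemma H2Eur p q : H2 X Y (lshift _ p) (rshift _ q) = (p == q)%:R * cf X Y (ix p).
Proof. by h2t p q. Qed.
Lemma H2Edl p q : H2 X Y (rshift _ p) (lshift _ q) = (p == q)%:R * cf Y X (ix p).
Proof. by h2t p q. Qed.
Lemma H2Edr p q : H2 X Y (rshift _ p) (rshift _ q) = (p == q)%:R * cf Y Y (ix p).
Proof. by h2t p q. Qed.
Ltac h3t := rewrite /H3 ?block_mxEul ?block_mxEur ?block_mxEdl ?block_mxEdr mxE [1%:M _ _]mxE conj_mulTE // comb2.
Lemma H3Eul p q : H3 X Y (lshift _ p) (lshift _ q) = (p == q)%:R * cf X X (kx p).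
Proof. by h3t. Qed.
Lemma H3Eur p q : H3 X Y (lshift _ p) (rshift _ q) = (p == q)%:R * cf X Y (kx p).
Proof. by h3t. Qed.
Lemma H3Edl p q : H3 X Y (rshift _ p) (lshift _ q) = (p == q)%:R * cf Y X (kx p).
Proof. by h3t. Qed.
Lemma H3Edr p q : H3 X Y (rshift _ p) (rshift _ q) = (p == q)%:R * cf Y Y (kx p).
Proof. by h3t. Qed.

Lemma entryD n (A B D : 'M[C]_n) c i j :
  (A - c *: (B + D)) i j = A i j - c * (B i j + D i j).
Proof. by rewrite !mxE. Qed.

Lemma Dblock : H1 X Y - 2^-1 *: (H2 X Y + H3 X Y) =
  block_mx (Dm X X) (Dm X Y) (Dm Y X) (Dm Y Y).
Proof.
apply/matrixP=> P Q; rewrite -(splitK P) -(splitK Q).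
case: (split P) => p; case: (split Q) => q /=;
rewrite ?block_mxEul ?block_mxEur ?block_mxEdl ?block_mxEdr entryD
 ?H1Eul ?H1Eur ?H1Edl ?H1Edr ?H2Eul ?H2Eur ?H2Edl ?H2Edr ?H3Eul ?H3Eur ?H3Edl ?H3Edr
 /fnorm2 ?tr_adjE // mxE /eF; ring.
Qed.

Lemma eq_eF f g p : (forall m, f m = g m) -> eF f p = eF g p.
Proof. by move=> e; rewrite /eF (eq_bigr _ (fun m _ => e m)) !e. Qed.

Lemma eF_comb f1 f2 f3 f4 (a1 a2 a3 a4 b1 b2 b3 b4 : C) p :
  a1 * eF f1 p * b1 + a2 * eF f2 p * b2 + a3 * eF f3 p * b3 + a4 * eF f4 p * b4
  = eF (fun m => a1 * f1 m * b1 + a2 * f2 m * b2 + a3 * f3 m * b3 + a4 * f4 m * b4) p.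
Proof. rewrite /eF !big_split /= -!mulr_suml -!mulr_sumr; ring. Qed.

Lemma half : (2^-1 + 2^-1 : C) = 1.
Proof. by field. Qed.

Lemma eF_ge0 f p : (forall m, 0 <= f m) -> 0 <= eF f p.
Proof.
move=> f0; rewrite /eF (bigD1 (ix p)) //=.
have [e|ne] := eqVneq (ix p) (kx p).
  rewrite -e; have -> : forall a b : C, a + b - 2^-1 * a - 2^-1 * a = b.
    by move=> a b; field.
  by apply: sumr_ge0 => m _.
rewrite (bigD1 (kx p)) /=; last by rewrite eq_sym.
have -> : forall a b c : C, a + (b + c) - 2^-1 * a - 2^-1 * b = 2^-1 * a + 2^-1 * b + c.
  by move=> a b c; field.
by rewrite !addr_ge0 ?mulr_ge0 ?invr_ge0 ?ler0n //; apply: sumr_ge0 => m _.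
Qed.

Lemma conj_half : (2^-1 : C)^* = 2^-1.
Proof. by rewrite geC0_conj // invr_ge0 ler0n. Qed.

Lemma eF_conj f p : (eF f p)^* = eF (fun m => (f m)^*) p.
Proof. by rewrite /eF !rmorphB rmorph_sum !rmorphM [_ 2^-1]conj_half. Qed.

Lemma Dm_adj A B : adjmx (Dm A B) = Dm B A.
Proof.
apply/matrixP=> p q; rewrite !mxE eq_sym.
have [<-|ne] := eqVneq p q; last by rewrite !mul0r rmorph0.
rewrite rmorphM rmorph_nat [_ (eF _ _)]eF_conj; congr (_ * _); apply: eq_eF => m.
by rewrite /cf rmorphM [_ (_ ^*)]conjCK mulrC.
Qed.

Lemma adj_block m1 m2 (A : 'M[C]_(m1,m1)) (B : 'M[C]_(m1,m2)) (D : 'M[C]_(m2,m1)) (E : 'M[C]_(m2,m2)) :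
  adjmx (block_mx A B D E) = block_mx (adjmx A) (adjmx D) (adjmx B) (adjmx E).
Proof. by rewrite /adjmx /Defs.conjmx map_block_mx tr_block_mx. Qed.

Lemma adj_col m1 m2 (u : 'cV[C]_m1) (w : 'cV[C]_m2) :
  adjmx (col_mx u w) = row_mx (adjmx u) (adjmx w).
Proof. by rewrite /adjmx /Defs.conjmx map_col_mx tr_col_mx. Qed.

Lemma quadDm A B (z z' : 'cV[C]_(d*d)) :
  (adjmx z *m Dm A B *m z') ord0 ord0 = \sum_p (z p ord0)^* * eF (cf A B) p * z' p ord0.
Proof.
rewrite mxE; apply: eq_bigr => q _; congr (_ * _).
rewrite mxE (bigD1 q) //= big1 ?addr0; last first.
  by move=> p ne; rewrite !mxE (negbTE ne) mul0r mulr0.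
by rewrite !mxE eqxx mul1r.
Qed.

Lemma entryAdd n1 n2 (A B : 'M[C]_(n1,n2)) i j : (A + B) i j = A i j + B i j.
Proof. by rewrite mxE. Qed.

Lemma psdD_block : psd (block_mx (Dm X X) (Dm X Y) (Dm Y X) (Dm Y Y)).
Proof.
split; first by rewrite adj_block !Dm_adj.
move=> v; rewrite -(vsubmxK v) adj_col mul_row_block mul_row_col !mulmxDl.
rewrite !entryAdd !quadDm -!big_split /=; apply: sumr_ge0 => p _.
set u := usubmx v p ord0; set w := dsubmx v p ord0.
rewrite -addrA addrCA !addrA eF_comb.
apply: eF_ge0 => m.
have -> : w^* * cf Y X m * u + u^* * cf X X m * u + u^* * cf X Y m * w +
  w^* * cf Y Y m * w = (X m m * u + Y m m * w) * (X m m * u + Y m m * w)^*.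
  rewrite /cf rmorphD !rmorphM /=; ring.
exact: mul_conjC_ge0.
Qed.

Lemma H4E : H4 X Y = adjmx (row_mx (colvec X)^T (colvec Y)^T) *m row_mx (colvec X)^T (colvec Y)^T.
Proof.
have aT : forall n (c : 'cV[C]_n), adjmx c^T = Defs.conjmx c.
  by move=> n c; rewrite /adjmx /Defs.conjmx map_trmx trmxK.
have aR : forall n1 n2 (a : 'rV[C]_n1) (b : 'rV[C]_n2),
    adjmx (row_mx a b) = col_mx (adjmx a) (adjmx b).
  by move=> n1 n2 a b; rewrite /adjmx /Defs.conjmx map_row_mx tr_row_mx.
by rewrite aR mul_col_row !aT.
Qed.
End Gen.

Theorem corollary5p2 (R : realType) (d : nat) (hd : (3 <= d)%N)
  (X Y : 'M[R[i]]_d) (hX : is_diag_mx X) (hY : is_diag_mx Y) :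
  psd (Hmat X Y).
Proof.
have d0 : (0 < d)%N by apply: leq_trans hd.
rewrite /Hmat (Dblock d0 hX hY); apply: psdD; first exact: psdD_block.
by apply: psdZ; [rewrite invr_ge0 ler0n | rewrite H4E; apply: psd_gram].
Qed.
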